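(* Let $\mathcal G\subseteq\{1,\ldots,n\}^2$ satisfy $(i,j)\in\mathcal G\iff(j,i)\in\mathcal G$, and let $1\leq N\leq|\{(i,j)\in\mathcal G: i\leq j\}|$. Define the deviation $d_{ij}$ either as the absolute deviation $|[P_k]_{ij}-[\tilde P_{k-1}]_{ij}|$ or as the relative deviation $|[P_k]_{ij}-[\tilde P_{k-1}]_{ij}|/|[\tilde P_{k-1}]_{ij}|$ (in the relative case assume $[\tilde P_{k-1}]_{ij}\neq0$ for $(i,j)\in\mathcal G$). Suppose that the index-value pairs of $\mathcal E_k$ with index in $\mathcal G$ and $i\leq j$ are exactly $N$ pairs such that $d_{ij}\geq d_{lm}$ whenever $(i,j)$ is one of them and $(l,m)\in\mathcal G$, $l\leq m$, is not; that $\mathcal E_k$ is symmetric (i.e. $((i,j),\cdot)\in\mathcal E_k\iff((j,i),\cdot)\in\mathcal E_k$); and that $\mathcal E_k$ may contain arbitrary further pairs with indices outside $\mathcal G$. For $(i,j)\in\mathcal G$ define $[\hat\Delta_k]_{ij}=0$ if $((i,j),\cdot)\in\mathcal E_k$, and otherwise $[\hat\Delta_k]_{ij}=\min_{((l,m),\cdot)\in\mathcal E_k,\,(l,m)\in\mathcal G}|[\tilde P_k]_{lm}-[\tilde P_{k-1}]_{lm}|$ in the absolute case, respectively $$[\hat\Delta_k]_{ij}=|[\tilde P_k]_{ij}|\min_{((l,m),\cdot)\in\mathcal E_k,\,(l,m)\in\mathcal G}\frac{|[\tilde P_k]_{lm}-[\tilde P_{k-1}]_{lm}|}{|[\tilde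 P_{k-1}]_{lm}|}$$ in the relative case. Then $|[\Delta_k]_{ij}|\leq[\hat\Delta_k]_{ij}$ for all $(i,j)\in\mathcal G$.
   Context: Setting (event-triggered transmission): $\mathcal S_n$ is the set of real symmetric $n\times n$ matrices. At time step $k$ a covariance matrix $P_k$ (real symmetric positive semidefinite $n\times n$) and a buffer matrix $\tilde P_{k-1}\in\mathcal S_n$ are given. The event set $\mathcal E_k$ is a set of index-value pairs $((i,j),[P_k]_{ij})$, and $((i,j),\cdot)\in\mathcal E_k$ means some pair with index $(i,j)$ lies in $\mathcal E_k$. The updated buffer $\tilde P_k$ is defined by $[\tilde P_k]_{ij}=[P_k]_{ij}$ if $((i,j),\cdot)\in\mathcal E_k$ and $[\tilde P_k]_{ij}=[\tilde P_{k-1}]_{ij}$ otherwise. The buffer error is $\Delta_k=\tilde P_k-P_k$. *)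

(* Defs.v *)
From HB Require Import structures.
From mathcomp Require Import all_boot all_order all_algebra.
Set Implicit Arguments. Unset Strict Implicit. Unset Printing Implicit Defensive.
Import Order.TTheory GRing.Theory Num.Theory.
Local Open Scope ring_scope.

(* Minimum of f over a finite set A (value 0 if A is empty; only used on
   nonempty sets). *)
Definition setmin (T : finType) (R : realDomainType) (A : {set T}) (f : T -> R) : R :=
  if enum A is x :: _ then \big[Order.min/f x]_(y in A) f y else 0.

Definition psd (R : realFieldType) (n : nat) (P : 'M[R]_n) : Prop :=
  P^T = P /\ forall x : 'cV[R]_n, 0 <= (x^T *m P *m x) 0 0.

Definition buffer_update (R : realFieldType) (n : nat) (E : {set 'I_n * 'I_n})
    (P Pold : 'M[R]_n) : 'M[R]_n :=
  \matrix_(i, j) (if (i, j) \in E then P i j else Pold i j).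

Definition deviation (R : realFieldType) (n : nat) (rel : bool)
    (P Pold : 'M[R]_n) (p : 'I_n * 'I_n) : R :=
  if rel then `|P p.1 p.2 - Pold p.1 p.2| / `|Pold p.1 p.2|
  else `|P p.1 p.2 - Pold p.1 p.2|.

Definition hatDelta (R : realFieldType) (n : nat) (rel : bool)
    (G E : {set 'I_n * 'I_n}) (P Pold : 'M[R]_n) (i j : 'I_n) : R :=
  let Pt := buffer_update E P Pold in
  if (i, j) \in E then 0
  else if rel then
    `|Pt i j| * setmin (E :&: G)
        (fun q => `|Pt q.1 q.2 - Pold q.1 q.2| / `|Pold q.1 q.2|)
  else setmin (E :&: G) (fun q => `|Pt q.1 q.2 - Pold q.1 q.2|).

(* Main.v *)
Require Import Defs.
From HB Require Import structures.
From mathcomp Require Import all_boot all_order all_algebra.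
Import Order.TTheory GRing.Theory Num.Theory.
Local Open Scope ring_scope.

Lemma setmin_ge (T : finType) (R : realDomainType) (A : {set T}) (f : T -> R) c :
  A != set0 -> (forall q, q \in A -> c <= f q) -> c <= setmin A f.
Proof.
move=> /set0Pn [x0 Hx0] H; rewrite /setmin.
have : x0 \in enum A by rewrite mem_enum.
case E: (enum A) => [|x s] //= _.
have Hx : x \in A by rewrite -mem_enum E inE eqxx.
apply: (big_ind (fun v => c <= v)); first exact: H.
  by move=> a b ha hb; rewrite le_min ha hb.
by move=> q; exact: H.
Qed.

Lemma dev_sym (R : realFieldType) n rel (P Pold : 'M[R]_n) a b :
  P^T = P -> Pold^T = Pold ->
  deviation rel P Pold (a, b) = deviation rel P Pold (b, a).
Proof.
move=> HP HO; rewrite /deviation /=.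
have eP : P b a = P a b by rewrite -[in LHS]HP mxE.
have eO : Pold b a = Pold a b by rewrite -[in LHS]HO mxE.
by rewrite eP eO.
Qed.

Theorem mainTheorem8 (R : realFieldType) (n : nat) (rel : bool)
    (G : {set 'I_n * 'I_n}) (N : nat) (P Pold : 'M[R]_n)
    (E : {set 'I_n * 'I_n}) :
  (forall i j : 'I_n, ((i, j) \in G) = ((j, i) \in G)) ->
  (1 <= N)%N ->
  (N <= #|[set p in G | (p.1 <= p.2)%N]|)%N ->
  psd P ->
  Pold^T = Pold ->
  (rel -> forall p, p \in G -> Pold p.1 p.2 != 0) ->
  #|[set p in E :&: G | (p.1 <= p.2)%N]| = N ->
  (forall p q, p \in E :&: G -> (p.1 <= p.2)%N ->
     q \in G -> (q.1 <= q.2)%N -> q \notin E ->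
     deviation rel P Pold q <= deviation rel P Pold p) ->
  (forall i j : 'I_n, ((i, j) \in E) = ((j, i) \in E)) ->
  forall i j : 'I_n, (i, j) \in G ->
    `|(buffer_update E P Pold - P) i j| <= hatDelta rel G E P Pold i j.
Proof.
move=> HG HN _ [HP _] HO Hnz Hcard Hdev HE i j Hij.
rewrite /hatDelta /buffer_update !mxE.
case: ifP => HijE; first by rewrite subrr normr0.
have Hne : E :&: G != set0.
  apply/set0Pn.
  have : (0 < #|[set p in E :&: G | (p.1 <= p.2)%N]|)%N by rewrite Hcard.
  case/card_gt0P => p; rewrite inE => /andP [Hp _]; by exists p.
have key : forall q, q \in E :&: G ->
    deviation rel P Pold (i, j) <= deviation rel P Pold q.
  case=> a b; rewrite inE => /andP [HaE HaG].
  have [p [Hp Hp1 Hpd]] : exists p, [/\ p \in E :&: G, (p.1 <= p.2)%N &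
      deviation rel P Pold p = deviation rel P Pold (a, b)].
    case: (leqP a b) => hab.
      by exists (a, b); split => //; rewrite inE HaE HaG.
    exists (b, a); split => /=; [by rewrite inE -HE -HG HaE HaG | exact: ltnW |].
    exact: dev_sym.
  rewrite -Hpd.
  case: (leqP i j) => hij.
    apply: Hdev => //; by rewrite HijE.
  rewrite (@dev_sym _ _ rel _ _ i j HP HO); apply: Hdev => //=.
  - by rewrite -HG.
  - exact: ltnW.
  - by rewrite -HE HijE.
have Hf : forall q, q \in E :&: G ->
    `|(if (q.1, q.2) \in E then P q.1 q.2 else Pold q.1 q.2) - Pold q.1 q.2|
    = `|P q.1 q.2 - Pold q.1 q.2|.
  by case=> a b; rewrite inE => /andP [-> _].
case: rel Hnz Hdev key => Hnz Hdev key.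
- have Hn0 := Hnz isT (i, j) Hij.
  have -> : `|Pold i j - P i j| = `|Pold i j| *
      (`|P i j - Pold i j| / `|Pold i j|).
    by rewrite mulrC divfK ?normr_eq0 // distrC.
  apply: ler_wpM2l; first exact: normr_ge0.
  apply: setmin_ge => // q Hq; rewrite !mxE Hf //.
  exact: (key q Hq).
- apply: setmin_ge => // q Hq; rewrite !mxE Hf // distrC.
  exact: (key q Hq).
Qed.
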